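(* Let $\mathcal G$ be a principal, ubiquitously fiberwise amenable groupoid (standing conventions). Then for every compact $K\subseteq\mathcal G$ and every $\epsilon>0$ there exists a normal $(K,\epsilon)$-Følner set in $\mathcal G$.
   Context: Standing conventions: a groupoid is a $\sigma$-compact, locally compact, Hausdorff, étale, ample groupoid $\mathcal G$ with compact unit space $\mathcal G^{(0)}$. Principal: the only $g$ with $s(g)=r(g)$ are units. For $A,B\subseteq\mathcal G$, $AB$ denotes composable products and $Au=\{a\in A:s(a)=u\}$. A multisection is a finite family $\{C_{i,j}:i,j\in F\}$ of bisections with $C_{i,j}C_{j,k}=C_{i,k}$ and pairwise disjoint levels $C_{i,i}\subseteq\mathcal G^{(0)}$. A finite nonempty $F\subseteq\mathcal G$ is $(K,\epsilon)$-Følner if $|KF\setminus F|\le\epsilon|F|$. $\mathcal G$ is ubiquitously fiberwise amenable if for every compact $K$ and $\epsilon>0$ there is compact $L$ such that every $u\in\mathcal G^{(0)}$ admits a $(K,\epsilon)$-Følner set contained in $Lu\cup\{u\}$. A normal set is a compact open $S\subseteq\mathcal G$ together with compact open multisections $\{C^l_{i,j}:i,j\in F_l\}$, $l=1,\dots,m$, and indices $i_l\in F_l$ with $S=\bigcup_{l=1}^m\bigsqcup_{i\in F_l}C^l_{i,i_l}$ and $\mathcal G^{(0)}=\bigsqcup_{l=1}^mC^l_{i_l,i_l}$; it is a normal $(K,\epsilon)$-Følner set if moreover $Su$ is $(K,\epsilon)$-Følner for every $u\in\mathcal G^{(0)}$. *)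

(* Defs.v *)
From HB Require Import structures.
From mathcomp Require Import all_boot all_order all_algebra.
From mathcomp Require Import all_classical all_reals all_analysis.
From mathcomp Require Import finmap.
From mathcomp Require Import Rstruct Rstruct_topology.
From Stdlib Require Rdefinitions.
Notation R := Rdefinitions.R.

Set Implicit Arguments.
Unset Strict Implicit.
Unset Printing Implicit Defensive.
Import Order.TTheory GRing.Theory Num.Theory.
Local Open Scope classical_set_scope.
Local Open Scope ring_scope.

(* The algebraic operations of a groupoid on the carrier T
   (composition gmul g h is only meaningful when gsrc g = grng h). *)
Record groupoid (T : Type) := Groupoid {
  gsrc : T -> T;
  grng : T -> T;
  gmul : T -> T -> T;
  ginv : T -> T }.

Section Groupoids.
Context {T : topologicalType} (G : groupoid T).

Local Notation s := (gsrc G).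
Local Notation r := (grng G).
Local Notation mul := (gmul G).
Local Notation inv := (ginv G).

Definition groupoid_axioms : Prop :=
  [/\ ((forall g, r (s g) = s g) /\ (forall g, s (r g) = r g)) /\
      ((forall g, r (r g) = r g) /\ (forall g, s (s g) = s g)),
      (forall g h, s g = r h -> s (mul g h) = s h /\ r (mul g h) = r g),
      (forall g h k, s g = r h -> s h = r k ->
                     mul (mul g h) k = mul g (mul h k)),
      (forall g, mul (r g) g = g /\ mul g (s g) = g) &
      (forall g, [/\ s (inv g) = r g, r (inv g) = s g,
                     mul g (inv g) = r g & mul (inv g) g = s g])].

Definition units : set T := range r.

Definition setmul (A B : set T) : set T :=
  [set x | exists a b, [/\ A a, B b, s a = r b & x = mul a b]].

Definition fiber (A : set T) (u : T) : set T := [set a | A a /\ s a = u].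

Definition bisection (B : set T) : Prop :=
  (forall x y, B x -> B y -> r x = r y -> x = y) /\
  (forall x y, B x -> B y -> s x = s y -> x = y).

Definition open_bisection (U : set T) : Prop :=
  [/\ open U, bisection U &
      forall V, open V -> V `<=` U -> open (r @` V) /\ open (s @` V)].

Definition compact_open_bisection (B : set T) : Prop :=
  [/\ compact B, open B & bisection B].

Definition composable : set (T * T) := [set p | s p.1 = r p.2].

(* Standing conventions: sigma-compact, locally compact, Hausdorff, etale,
   ample topological groupoid with compact unit space. *)
Definition standing_groupoid : Prop :=
  [/\ groupoid_axioms,
      [/\ continuous s, continuous r, continuous inv &
          {within composable, continuous (fun p : T * T => mul p.1 p.2)}],
      [/\ hausdorff_space T,
          (forall x : T, exists K, compact K /\ nbhs x K),
          (exists f : nat -> set T, (forall n, compact (f n)) /\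
                                    \bigcup_n f n = setT) &
          compact units],
      (forall x : T, exists U, open_bisection U /\ U x) &
      (forall x (W : set T), open W -> W x ->
          exists B, [/\ compact_open_bisection B, B x & B `<=` W])].

Definition principal : Prop := forall g, s g = r g -> units g.

Definition folner (K : set T) (eps : R) (F : set T) : Prop :=
  F !=set0 /\
  exists DF D : {fset T},
    [/\ [set` DF] = F, [set` D] = setmul K F `\` F &
        (#|` D|%:R <= eps * #|` DF|%:R)%R].

Definition ubiquitously_fiberwise_amenable : Prop :=
  forall K : set T, compact K -> forall eps : R, (0 < eps)%R ->
    exists L : set T, compact L /\
      forall u, units u ->
        exists F, folner K eps F /\ F `<=` fiber L u `|` [set u].

Definition multisection (n : nat) (C : 'I_n -> 'I_n -> set T) : Prop :=
  [/\ (forall i j, bisection (C i j)),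
      (forall i j k, setmul (C i j) (C j k) = C i k),
      (forall i, C i i `<=` units) &
      (forall i j, i != j -> C i i `&` C j j = set0)].

Definition normal_set (S : set T) : Prop :=
  compact S /\ open S /\
  exists (m : nat) (n : 'I_m -> nat)
         (C : forall l : 'I_m, 'I_(n l) -> 'I_(n l) -> set T)
         (il : forall l : 'I_m, 'I_(n l)),
    [/\ (forall l, multisection (C l)),
        (forall l i j, compact (C l i j) /\ open (C l i j)),
        S = [set g | exists l i, C l i (il l) g]
          /\ (forall l i j, i != j -> C l i (il l) `&` C l j (il l) = set0),
        units = [set g | exists l, C l (il l) (il l) g] &
        (forall l l', l != l' ->
           C l (il l) (il l) `&` C l' (il l') (il l') = set0)].

Definition normal_folner (K : set T) (eps : R) (S : set T) : Prop :=
  normal_set S /\ forall u, units u -> folner K eps (fiber S u).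

End Groupoids.

(* Main.v *)
Require Import Defs.
From mathcomp Require Import all_boot all_order all_algebra.
From mathcomp Require Import all_classical all_reals all_analysis.
From mathcomp Require Import Rstruct Rstruct_topology.
Local Open Scope classical_set_scope.
From HB Require Import structures.
From mathcomp Require Import finmap.
From mathcomp Require Import ring lra.
Set Implicit Arguments.
Unset Strict Implicit.
Unset Printing Implicit Defensive.
Import Order.TTheory GRing.Theory Num.Theory.
Section Alg.
Context {T : topologicalType} (G : groupoid T).
Local Notation s := (gsrc G).
Local Notation r := (grng G).
Local Notation mul := (gmul G).
Local Notation inv := (ginv G).
Context (HA : groupoid_axioms G) (HP : principal G).

Lemma rs g : r (s g) = s g. Proof. by case: HA => [[[]]]. Qed.
Lemma sr g : s (r g) = r g. Proof. by case: HA => [[[]]]. Qed.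
Lemma rr g : r (r g) = r g. Proof. by case: HA => [[_ []]]. Qed.
Lemma ss g : s (s g) = s g. Proof. by case: HA => [[_ []]]. Qed.
Lemma smul g h : s g = r h -> s (mul g h) = s h.
Proof. by case: HA => _ H _ _ _ /H []. Qed.
Lemma rmul g h : s g = r h -> r (mul g h) = r g.
Proof. by case: HA => _ H _ _ _ /H []. Qed.
Lemma mulA g h k : s g = r h -> s h = r k -> mul (mul g h) k = mul g (mul h k).
Proof. by case: HA => _ _ H _ _; apply: H. Qed.
Lemma mulr1 g : mul g (s g) = g. Proof. by case: HA => _ _ _ H _; case: (H g). Qed.
Lemma mul1r g : mul (r g) g = g. Proof. by case: HA => _ _ _ H _; case: (H g). Qed.
Lemma sinv g : s (inv g) = r g. Proof. by case: HA => _ _ _ _ H; case: (H g). Qed.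
Lemma rinv g : r (inv g) = s g. Proof. by case: HA => _ _ _ _ H; case: (H g). Qed.
Lemma mulinv g : mul g (inv g) = r g. Proof. by case: HA => _ _ _ _ H; case: (H g). Qed.
Lemma invmul g : mul (inv g) g = s g. Proof. by case: HA => _ _ _ _ H; case: (H g). Qed.

Lemma unitsE x : units G x <-> r x = x.
Proof. by split => [[g _ <-]|<-]; [rewrite rr|exists x]. Qed.
Lemma units_s x : units G x -> s x = x.
Proof. by case=> g _ <-; rewrite sr. Qed.
Lemma units_r x : units G x -> r x = x.
Proof. by move/unitsE. Qed.

Lemma eq_rs g h : s g = s h -> r g = r h -> g = h.
Proof.
move=> sgh rgh.
have cp : s g = r (inv h) by rewrite rinv.
set k := mul g (inv h).
have sk : s k = r k by rewrite /k smul // rmul // sinv.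
have uk : units G k by apply: HP.
have kE : k = r g by rewrite -[LHS](units_r uk) /k rmul.
have : mul k h = g.
  by rewrite /k mulA ?sinv // invmul -sgh mulr1.
by rewrite kE rgh mul1r.
Qed.

Lemma mul_inv_rs a b : s a = s b ->
  r (mul a (inv b)) = r a /\ s (mul a (inv b)) = r b.
Proof. by move=> e; rewrite rmul ?smul ?sinv ?rinv. Qed.

End Alg.

Section Topo.
Context {T : topologicalType} (G : groupoid T).
Local Notation s := (gsrc G).
Local Notation r := (grng G).
Local Notation mul := (gmul G).
Local Notation inv := (ginv G).
Context (HS : standing_groupoid G) (HP : principal G).

Lemma HA : groupoid_axioms G. Proof. by case: HS. Qed.
Lemma s_cont : continuous s. Proof. by case: HS => _ [] . Qed.
Lemma r_cont : continuous r. Proof. by case: HS => _ [] . Qed.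
Lemma inv_cont : continuous inv. Proof. by case: HS => _ [] . Qed.
Lemma mul_cont : {within composable G, continuous (fun p : T * T => mul p.1 p.2)}.
Proof. by case: HS => _ [] . Qed.
Lemma hausT : hausdorff_space T. Proof. by case: HS => _ _ []. Qed.
Lemma units_compact : compact (units G). Proof. by case: HS => _ _ []. Qed.
Lemma etale x : exists U, open_bisection G U /\ U x. Proof. by case: HS. Qed.
Lemma ample x (W : set T) : open W -> W x ->
  exists B, [/\ compact_open_bisection G B, B x & B `<=` W].
Proof. by case: HS => _ _ _ _; apply. Qed.

Lemma open_s V : open V -> open (s @` V).
Proof.
move=> oV; rewrite openE => y [x Vx <-].
have [U [[oU bU imU] Ux]] := etale x.
have [_ h1] := imU (V `&` U) (openI oV oU) (@subIsetr _ _ _).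
apply: (@filterS _ _ _ (s @` (V `&` U))); first by move=> z [w [Vw _] <-]; exists w.
by apply: open_nbhs_nbhs; split => //; exists x => //; split.
Qed.

Lemma open_r V : open V -> open (r @` V).
Proof.
move=> oV; rewrite openE => y [x Vx <-].
have [U [[oU bU imU] Ux]] := etale x.
have [h1 _] := imU (V `&` U) (openI oV oU) (@subIsetr _ _ _).
apply: (@filterS _ _ _ (r @` (V `&` U))); first by move=> z [w [Vw _] <-]; exists w.
by apply: open_nbhs_nbhs; split => //; exists x => //; split.
Qed.

Lemma units_open : open (units G).
Proof. by rewrite /units; apply: open_r; exact: openT. Qed.

Lemma compact_closedT (A : set T) : compact A -> closed A.
Proof. by move=> cA; apply: compact_closed => //; exact: hausT. Qed.

Lemma loc_s (B N : set T) f : open B -> bisection G B -> B f -> nbhs f N ->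
  \forall w \near s f, forall a, B a -> s a = w -> N a.
Proof.
move=> oB bB Bf Nf.
have oV : open (B `&` interior N) by apply: openI => //; exact: open_interior.
have : nbhs (s f) (s @` (B `&` interior N)).
  by apply: open_nbhs_nbhs; split; [exact: open_s|exists f => //; split].
apply: filterS => w [v [Bv Nv] <-] a Ba sa.
have -> : a = v by apply: bB.2.
exact: interior_subset.
Qed.

Lemma mul_loc a b N : s a = r b -> nbhs (mul a b) N ->
  exists P Q, [/\ nbhs a P, nbhs b Q &
    forall x y, P x -> Q y -> s x = r y -> N (mul x y)].
Proof.
move=> ab Nab.
have := (subspace_continuousP _ _).1 mul_cont (a, b) ab N Nab.
rewrite /= /within /= => -[[P Q] /= [Pa Qb] PQ].
exists P, Q; split => // x y Px Qy sxy.
exact: (PQ (x, y)).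
Qed.

Lemma inv_loc x N : nbhs (inv x) N -> nbhs x (inv @^-1` N).
Proof. by move=> Nx; apply: inv_cont. Qed.
Lemma s_loc x N : nbhs (s x) N -> nbhs x (s @^-1` N).
Proof. by move=> Nx; apply: s_cont. Qed.
Lemma r_loc x N : nbhs (r x) N -> nbhs x (r @^-1` N).
Proof. by move=> Nx; apply: r_cont. Qed.

End Topo.

Section FinCover.
Context {T : topologicalType}.

Definition fsup_filter : set_system {fset T} :=
  [set Q | exists D0 : {fset T}, forall D, (D0 `<=` D)%fset -> Q D].

Lemma fsup_filterF : Filter fsup_filter.
Proof.
split.
- by exists fset0.
- move=> P Q [D1 H1] [D2 H2]; exists (D1 `|` D2)%fset => D sub; split.
    by apply: H1; apply: fsubset_trans sub; apply: fsubsetUl.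
  by apply: H2; apply: fsubset_trans sub; apply: fsubsetUr.
- by move=> P Q PQ [D1 H1]; exists D1 => D /H1 /PQ.
Qed.

Lemma fin_cover (K : set T) (V : T -> set T) : compact K ->
  (forall x, K x -> nbhs x (V x)) ->
  exists D : {fset T}, (forall x, x \in D -> K x) /\
    K `<=` [set y | exists2 x, x \in D & V x y].
Proof.
move=> cK nV.
have := (compact_near_coveringP K).1 cK {fset T} fsup_filter
  (fun D y => exists2 x, x \in D & K x /\ V x y) fsup_filterF.
case.
  move=> x Kx; exists (V x, [set D : {fset T} | x \in D]) => /=.
    split; first exact: nV.
    by exists [fset x]%fset => D; rewrite fsub1set.
  by move=> [y D] /= [Vy xD]; exists x.
move=> D0 /(_ D0 (fsubset_refl _)) HD.
exists [fset x in D0 | `[< K x >]]%fset; split.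
  by move=> x; rewrite !inE => /andP[_ /asboolP].
move=> y /HD [x xD [Kx Vy]]; exists x => //.
by rewrite !inE xD /=; apply/asboolP.
Qed.

End FinCover.

Section Count.
Context {T : choiceType}.

Lemma count_cover {I : eqType} (A : set T) (l : seq I) (h : I -> set T) :
  A `<=` [set y | exists2 k, k \in l & h k y] ->
  (forall k y y', h k y -> h k y' -> A y -> A y' -> y = y') ->
  exists D : {fset T}, [set` D] = A /\ (#|` D| <= size l)%N.
Proof.
move=> Acov hinj.
pose g k := if pselect (exists y, A y /\ h k y) is left P
  then Some (projT1 (cid P)) else None.
exists [fset y in pmap g l]%fset; split.
  apply/seteqP; split => y /=.
    rewrite !inE mem_pmap => /mapP[k kl].
    rewrite /g; case: pselect => // P [->].
    by case: (projT2 (cid P)).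
  move=> Ay; have [k kl hky] := Acov y Ay.
  rewrite !inE mem_pmap; apply/mapP; exists k => //.
  rewrite /g; case: pselect => [P|]; last by case; exists y.
  have [A1 h1] := projT2 (cid P); congr Some.
  exact: (hinj k _ _ hky h1 Ay A1).
rewrite card_fseq; apply: leq_trans (size_undup _) _.
by rewrite size_pmap count_size.
Qed.

Lemma fset_of_uniq (l : seq T) : uniq l ->
  [set` [fset x in l]%fset] = [set x | x \in l] /\ #|` [fset x in l]%fset| = size l.
Proof.
move=> ul; split; last by rewrite card_fseq undup_id.
by apply/seteqP; split => x /=; rewrite !inE.
Qed.

End Count.

Section Fol.
Context {T : topologicalType} (G : groupoid T).
Local Notation s := (gsrc G).
Local Notation r := (grng G).
Local Notation mul := (gmul G).
Local Notation inv := (ginv G).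
Context (HS : standing_groupoid G) (HP : principal G).
Let HA := HA HS.

Definition bnd (K A : set T) := setmul G K A `\` A.

Definition folS (K : set T) (d : R) (E : {fset T}) :=
  exists X : {fset T}, [set` X] = bnd K [set` E] /\ (#|` X|%:R <= d * #|` E|%:R)%R.

Lemma folS_union K d E1 E2 : folS K d E1 -> folS K d E2 ->
  (E1 `&` E2 = fset0)%fset -> folS K d (E1 `|` E2)%fset.
Proof.
move=> [X1 [h1 c1]] [X2 [h2 c2]] E12.
have cov : bnd K [set` (E1 `|` E2)%fset] `<=`
    [set y | exists2 k, k \in enum_fset X1 ++ enum_fset X2 & [set k] y].
  move=> y [[k [x [Kk Ex skx ->]]] nE]; exists (mul k x) => //.
  move: Ex; rewrite /= in_fsetU mem_cat => /orP[xE|xE]; apply/orP.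
    left; have : [set` X1] (mul k x).
      rewrite h1; split; first by exists k, x.
      by move=> /= h; apply: nE; rewrite /= in_fsetU h.
    by [].
  right; have : [set` X2] (mul k x).
    rewrite h2; split; first by exists k, x.
    by move=> /= h; apply: nE; rewrite /= in_fsetU h orbT.
  by [].
have [X [hX cX]] := count_cover cov (fun k y y' (h : [set k] y) (h' : [set k] y') _ _ =>
  etrans h (esym h')).
exists X; split => //.
have -> : #|` (E1 `|` E2)%fset| = (#|` E1| + #|` E2|)%N.
  by rewrite cardfsU E12 cardfs0 subn0.
rewrite natrD mulrDr.
apply: le_trans (lerD c1 c2).
by rewrite -natrD ler_nat -size_cat.
Qed.

Lemma folS_translate K d (F : {fset T}) g :
  (forall x, x \in F -> s x = r g) -> folS K d F ->
  let E := [fset mul f g | f in F]%fset in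
  [/\ folS K d E, #|` E| = #|` F| & forall x, x \in E -> s x = s g].
Proof.
move=> sF [X [hX cX]] E.
have inj : {in F &, injective (fun f => mul f g)}.
  move=> f f' fF f'F /= e.
  apply: (eq_rs HA HP); first by rewrite !sF.
  by rewrite -(rmul HA (sF _ fF)) e (rmul HA (sF _ f'F)).
have cE : #|` E| = #|` F| by rewrite /E card_in_imfset.
split => //; last first.
  by move=> x /imfsetP[f fF ->]; rewrite (smul HA (sF _ fF)).
have cov : bnd K [set` E] `<=`
    [set y | exists2 k, k \in enum_fset X & [set mul k g] y].
  move=> y [[k [x [Kk Ex skx ->]]] nE].
  move: Ex => /= /imfsetP[f fF xE]; subst x.
  have sf := sF _ fF.
  have skf : s k = r f by rewrite skx (rmul HA sf).
  exists (mul k f).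
    have : [set` X] (mul k f).
      rewrite hX; split; first by exists k, f.
      move=> /= kfF; apply: nE => /=; apply/imfsetP; exists (mul k f) => //.
      by rewrite (mulA HA skf sf).
    by [].
  by rewrite /= (mulA HA skf sf).
have [Y [hY cY]] := count_cover cov (fun k y y' (h : [set mul k g] y) (h' : [set mul k g] y') _ _ =>
  etrans h (esym h')).
exists Y; split => //; rewrite cE; apply: le_trans cX.
by rewrite ler_nat.
Qed.

End Fol.

Section FolU.
Context {T : topologicalType} (G : groupoid T).
Local Notation s := (gsrc G).
Local Notation r := (grng G).
Local Notation mul := (gmul G).
Local Notation inv := (ginv G).
Context (HS : standing_groupoid G) (HP : principal G).
Let HA := HA HS.

Lemma bis_cover (K : set T) : compact K -> exists (U : T -> set T) (D : {fset T}),
  (forall x, bisection G (U x)) /\ K `<=` [set y | exists2 x, x \in D & U x y].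
Proof.
move=> cK.
have [U hU] := choice (etale HS).
have nU x : K x -> nbhs x (U x).
  by move=> _; case: (hU x) => -[oU _ _] Ux; apply: open_nbhs_nbhs.
have [D [_ cov]] := fin_cover cK nU.
by exists U, D; split => // x; case: (hU x) => -[].
Qed.

Lemma bnd0 K : bnd G K set0 = set0.
Proof. by apply/seteqP; split => // y [[k [x [_ []]]]]. Qed.

Lemma fol_at_u (UFA : ubiquitously_fiberwise_amenable G) K (cK : compact K)
  eps (eps0 : (0 < eps)%R) u (uu : units G u) :
  exists DF : {fset T},
    [/\ u \in DF, (forall x, x \in DF -> s x = u) & folS G K eps DF].
Proof.
have [U1 [D1 [bU1 cov1]]] := bis_cover cK.
pose p := #|` D1|.
pose d : R := (eps / 2)%R.
have d0 : (0 < d)%R by rewrite divr_gt0.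
have [L [cL FL]] := UFA K cK d d0.
have [U2 [D2 [bU2 cov2]]] := bis_cover cL.
have su : s u = u := units_s HA uu.
have [[E hE]|big] := pselect (exists E : {fset T}, [set` E] = [set g | s g = u]).
  have sE x : x \in E -> s x = u by move=> xE; have : [set` E] x by []; rewrite hE.
  exists E; split => //.
    by have h1 : [set g | s g = u] u by []; rewrite -hE in h1.
  exists fset0; split.
    rewrite set_fset0; apply/seteqP; split => // y [[k [x [Kk Ex skx ->]]] nE].
    apply: nE; have h1 : [set g | s g = u] (mul k x).
      by rewrite /= (smul HA skx); apply: sE.
    by rewrite -hE in h1.
  by rewrite cardfs0 mulr_ge0 // ltW.
pose bad (E : {fset T}) g := (exists e, e \in E /\ r e = r g) \/
  (exists y, L y /\ s y = r g /\ exists e, e \in E /\ r y = r e).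
have grow n : exists E : {fset T},
    [/\ (forall x, x \in E -> s x = u), folS G K d E & (n <= #|` E|)%N].
  elim: n => [|n [E [sE fE nE]]].
    exists fset0; split => //; exists fset0; split; last by rewrite cardfs0 mulr0.
    by rewrite set_fset0 bnd0.
  have [g [sg nbad]] : exists g, s g = u /\ ~ bad E g.
    apply: contrapT => nex; apply: big.
    pose h (k : T + (T * T)) : set T := match k with
      | inl e => [set g | s g = u /\ r g = r e]
      | inr (x, e) => [set g | s g = u /\ exists y, U2 x y /\ s y = r g /\ r y = r e]
      end.
    have cov : [set g | s g = u] `<=` [set g | exists2 k,
        k \in map inl (enum_fset E) ++ [seq inr (x, e) | x <- enum_fset D2, e <- enum_fset E]
        & h k g].
      move=> g /= sg.
      have : bad E g by apply: contrapT => nb; apply: nex; exists g.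
      case=> [[e [eE re]]|[y [Ly [sy [e [eE ry]]]]]].
        by exists (inl e); [rewrite mem_cat map_f|].
      have [x xD U2y] := cov2 y Ly.
      exists (inr (x, e)); last by split => //; exists y.
      by rewrite mem_cat; apply/orP; right; apply: (allpairs_f (fun x e => inr (x, e))).
    have inj : forall k y y', h k y -> h k y' -> [set g | s g = u] y ->
        [set g | s g = u] y' -> y = y'.
      move=> [e|[x e]] y y' /=.
        by move=> [sy ry] [sy' ry'] _ _; apply: (eq_rs HA HP); rewrite ?sy ?sy' ?ry ?ry'.
      move=> [sy [z [Uz [sz rz]]]] [sy' [z' [Uz' [sz' rz']]]] _ _.
      have zz : z = z' by apply: (bU2 x).1 => //; rewrite rz rz'.
      by apply: (eq_rs HA HP); rewrite ?sy ?sy' // -sz -sz' zz.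
    by have [D [hD _]] := count_cover cov inj; exists D.
  have uv : units G (r g) by exists g.
  have [F [[[f0 Ff0] [DF0 [X0 [hDF0 hX0 cX0]]]] FLv]] := FL (r g) uv.
  have sF : forall x, x \in DF0 -> s x = r g.
    move=> x xD; have : F x by rewrite -hDF0.
    by move/FLv => [[_ ->]|->] //; rewrite (units_s HA uv).
  have fF : folS G K d DF0 by exists X0; rewrite hDF0.
  have [fE2 cE2 sE2] := folS_translate HS HP sF fF.
  set E2 := [fset mul f g | f in DF0]%fset in fE2 cE2 sE2.
  have dis : (E `&` E2 = fset0)%fset.
    apply/eqP; rewrite -fsubset0; apply/fsubsetP => x; rewrite in_fsetI.
    move=> /andP[xE /imfsetP[f fD xe]]; exfalso; apply: nbad.
    have rx : r x = r f by rewrite xe (rmul HA (sF _ fD)).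
    have : F f by rewrite -hDF0.
    move/FLv => [[Lf sf]|fv].
      by right; exists f; split => //; split => //; exists x.
    by left; exists x; split => //; rewrite rx fv (units_r HA uv).
  exists (E `|` E2)%fset; split.
  - by move=> x; rewrite in_fsetU => /orP[/sE|/sE2] //; rewrite sg.
  - exact: folS_union.
  - rewrite cardfsU dis cardfs0 subn0 cE2 -addn1 leq_add //.
    rewrite cardfs_gt0; apply/eqP => D0; move: Ff0; rewrite -hDF0 D0.
    by rewrite /= in_fset0.
pose N := Num.bound (p%:R / d)%R.
have [E [sE [X [hX cX]] NE]] := grow N.
have pE : (p%:R <= d * #|` E|%:R)%R.
  have h := archi_boundP (divr_ge0 (ler0n _ p) (ltW d0)).
  apply: (@le_trans _ _ (d * N%:R)%R); last by rewrite ler_pM2l // ler_nat.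
  have -> : (p%:R = p%:R / d * d :> R)%R by rewrite divfK // gt_eqF.
  by rewrite [X in (X <= _)%R]mulrC ler_pM2l // ltW.
have fsU x : (x \in (u |` E)%fset) = (x == u) || (x \in E).
  by rewrite in_fsetU in_fset1.
exists (u |` E)%fset; split.
- by rewrite fsU eqxx.
- by move=> x; rewrite fsU => /orP[/eqP->|/sE].
pose h (k : T + T) : set T := match k with
  | inl x => [set x] | inr z => [set y | U1 z y /\ s y = u] end.
have cov : bnd G K [set` (u |` E)%fset] `<=` [set y | exists2 k,
    k \in map inl (enum_fset X) ++ map inr (enum_fset D1) & h k y].
  move=> y [[k [x [Kk xE skx ->]]] nE].
  move: xE; rewrite /= fsU => /orP[/eqP xu|xE].
    subst x.
    have sk : s k = u by rewrite skx (units_r HA uu).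
    have mk : mul k u = k by rewrite -{1}sk mulr1.
    rewrite mk; have [z zD Uz] := cov1 k Kk.
    exists (inr z); last by split.
    by rewrite mem_cat; apply/orP; right; apply: map_f.
  have : [set` X] (mul k x).
    rewrite hX; split; first by exists k, x.
    move=> h1; apply: nE; rewrite /= fsU.
    by have -> : mul k x \in E by []; rewrite orbT.
  move=> Xy; exists (inl (mul k x)) => //.
  by rewrite mem_cat; apply/orP; left; apply: map_f.
have inj : forall k y y', h k y -> h k y' -> bnd G K [set` (u |` E)%fset] y ->
    bnd G K [set` (u |` E)%fset] y' -> y = y'.
  move=> [x|z] y y' /=; first by move=> -> ->.
  move=> [Uy sy] [Uy' sy'] _ _; apply: (bU1 z).2 => //; by rewrite sy sy'.
have [Y [hY cY]] := count_cover cov inj.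
exists Y; split => //.
apply: (@le_trans _ _ (((#|` X| + p)%N)%:R)%R).
  rewrite ler_nat; apply: leq_trans cY _.
  by rewrite size_cat !size_map.
rewrite natrD.
have cEU : (#|` E|%:R <= #|` (u |` E)%fset|%:R :> R)%R.
  by rewrite ler_nat cardfsU1 leq_addl.
apply: le_trans (lerD cX pE) _.
rewrite -mulrDl.
have -> : (d + d = eps)%R by rewrite /d -splitr.
by rewrite ler_pM2l.
Qed.

End FolU.

Section Tube.
Context {T : topologicalType} (G : groupoid T).
Local Notation s := (gsrc G).
Local Notation r := (grng G).
Local Notation mul := (gmul G).
Local Notation inv := (ginv G).
Context (HS : standing_groupoid G) (HP : principal G).
Let HA := HA HS.

Lemma tube K (cK : compact K) f (Z : set T) : open Z ->
  (forall k, K k -> s k = r f -> Z (mul k f)) ->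
  exists Q, nbhs f Q /\ forall a k, Q a -> K k -> s k = r a -> Z (mul k a).
Proof.
move=> oZ KZ.
have step : forall k, exists PQ : set T * set T, K k -> [/\ nbhs k PQ.1, nbhs f PQ.2 &
    forall x y, PQ.1 x -> PQ.2 y -> s x = r y -> Z (mul x y)].
  move=> k; have [Kk|nKk] := pselect (K k); last by exists (setT, setT).
  have [e|ne] := eqVneq (s k) (r f).
    have nZ : nbhs (mul k f) Z by apply: open_nbhs_nbhs; split => //; apply: KZ.
    have [P [Q [Pk Qf PQ]]] := mul_loc HS e nZ.
    by exists (P, Q).
  have := hausT HS; rewrite open_hausdorff => /(_ _ _ ne).
  move=> [[A1 A2] /= [kA1 fA2] [oA1 oA2 /eqP A12]].
  exists (s @^-1` A1, r @^-1` A2) => _; split => /=.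
  - by apply: (s_loc HS); apply: open_nbhs_nbhs; split => //; apply: set_mem.
  - by apply: (r_loc HS); apply: open_nbhs_nbhs; split => //; apply: set_mem.
  - move=> x y A1x A2y sxy; exfalso.
    have : (A1 `&` A2) (s x) by split => //; rewrite sxy.
    by rewrite A12.
have [PQ hPQ] := choice step.
have nP : forall k, K k -> nbhs k (PQ k).1 by move=> k /hPQ [].
have [D [DK cov]] := fin_cover cK nP.
exists (\bigcap_(k in [set` D]) (PQ k).2); split.
  by apply: filter_bigI => k kD; case: (hPQ k (DK k kD)).
move=> a k Qa Kk ska; have [k0 k0D Pk] := cov k Kk.
case: (hPQ k0 (DK _ k0D)) => _ _; apply => //.
exact: Qa k0 k0D.
Qed.

End Tube.

Section Local.
Context {T : topologicalType} (G : groupoid T).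
Local Notation s := (gsrc G).
Local Notation r := (grng G).
Local Notation mul := (gmul G).
Local Notation inv := (ginv G).
Context (HS : standing_groupoid G) (HP : principal G).
Let HA := HA HS.

Definition local_data (K : set T) (eps : R) (N : nat) (B : 'I_N -> set T)
  (E : 'I_N -> 'I_N -> set T) (i0 : 'I_N) (O : set T) : Prop :=
  [/\ [/\ open O, O `<=` units G & (forall i, compact_open_bisection G (B i))],
     (forall i j, compact_open_bisection G (E i j)),
     B i0 `<=` units G,
     (forall i j a b, i != j -> B i a -> B j b -> r a <> r b) &
     (forall w, O w -> [/\ (forall i, exists a, B i a /\ s a = w),
        (forall i j a b, B i a -> B j b -> s a = w -> s b = w ->
           exists g, [/\ E i j g, r g = r a & s g = r b]) &
        folner G K eps [set a | exists i, B i a /\ s a = w]])].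

Lemma local (UFA : ubiquitously_fiberwise_amenable G) K (cK : compact K)
  eps (eps0 : (0 < eps)%R) u (uu : units G u) :
  exists N B E i0 O, O u /\ @local_data K eps N B E i0 O.
Proof.
have [DF [uDF sDF [X [hX cX]]]] := fol_at_u HS HP UFA cK eps0 uu.
pose sq := enum_fset DF.
pose N := size sq.
have usq : uniq sq by apply: fset_uniq.
pose f (i : 'I_N) := nth u sq i.
have fD i : f i \in DF by rewrite /f mem_nth.
have finj : injective f.
  by move=> i j /eqP; rewrite /f nth_uniq // => /eqP/val_inj.
have sf i : s (f i) = u := sDF _ (fD i).
have i0lt : (index u sq < N)%N by rewrite index_mem.
pose i0 := Ordinal i0lt.
have fi0 : f i0 = u by rewrite /f nth_index.
have fsurj x : x \in DF -> exists i, f i = x.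
  move=> xD; have lt : (index x sq < N)%N by rewrite index_mem.
  by exists (Ordinal lt); rewrite /f nth_index.
have rf_inj i j : r (f i) = r (f j) -> i = j.
  by move=> e; apply: finj; apply: (eq_rs HA HP) => //; rewrite !sf.
have sep : forall ij : 'I_N * 'I_N, exists AB : set T * set T,
   ij.1 != ij.2 -> [/\ open AB.1, open AB.2, AB.1 (r (f ij.1)), AB.2 (r (f ij.2))
     & AB.1 `&` AB.2 = set0].
  move=> [i j]; have [e|ne] := eqVneq i j; first by exists (setT, setT).
  have ne' : r (f i) != r (f j) by apply/eqP => /rf_inj /eqP; rewrite (negbTE ne).
  have := hausT HS; rewrite open_hausdorff => /(_ _ _ ne').
  move=> [[A1 A2] /= [iA1 jA2] [oA1 oA2 /eqP A12]].
  by exists (A1, A2) => _; split => //; apply: set_mem.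
have [Sep hSep] := choice sep.
pose V (i : 'I_N) := [set x | forall j, i != j -> (Sep (i, j)).1 x /\ (Sep (j, i)).2 x].
have nV i : nbhs (r (f i)) (V i).
  apply: filter_forall => j.
  have [e|ne] := eqVneq i j.
    by apply: filterS filterT => x _ /=.
  have [q1 q2 a1 a2 _] := hSep (i, j) ne.
  have ne' : (j, i).1 != (j, i).2 by rewrite /= eq_sym.
  have [q1' q2' a1' a2' _] := hSep (j, i) ne'.
  apply: filterS (filterI (open_nbhs_nbhs (conj q1 a1)) (open_nbhs_nbhs (conj q2' a2'))).
  by move=> x [h1 h2] _; split.
have Vdis i j x : i != j -> V i x -> V j x -> False.
  move=> ne Vi Vj; have [h1 _] := Vi j ne.
  have ji : j != i by rewrite eq_sym.
  have [_ h2] := Vj i ji.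
  have [_ _ _ _ E0] := hSep (i, j) ne.
  have : ((Sep (i, j)).1 `&` (Sep (i, j)).2) x by split.
  by rewrite E0.
have Bex i : exists B0, [/\ compact_open_bisection G B0, B0 (f i) &
    B0 `<=` r @^-1` (V i)° `&` (if i == i0 then units G else setT)].
  apply: (ample HS).
    apply: openI; first exact: (continuousP _).1 (r_cont HS) _ (@open_interior _ _).
    by case: ifP => _; [exact: units_open HS|exact: openT].
  split; first exact: (nV i).
  by case: ifP => [/eqP->|//]; rewrite fi0.
have [B hB] := choice Bex.
have oB i : open (B i) by case: (hB i) => -[].
have cB i : compact (B i) by case: (hB i) => -[].
have bB i : bisection G (B i) by case: (hB i) => -[].
have Bf i : B i (f i) by case: (hB i).
have BV i a : B i a -> V i (r a).
  by move=> Ba; case: (hB i) => _ _ /(_ a Ba) [/interior_subset].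
have Bu : B i0 `<=` units G.
  by move=> a Ba; case: (hB i0) => _ _ /(_ a Ba) []; rewrite eqxx.
have Eex (ij : 'I_N * 'I_N) : exists E0, [/\ compact_open_bisection G E0,
    E0 (mul (f ij.1) (inv (f ij.2))) & E0 `<=` setT].
  by apply: (ample HS) => //; exact: openT.
have [E hE] := choice Eex.
have [Y hY] := choice (etale HS).
pose Z := [set y | (exists i, B i y) \/ (exists2 x, x \in X & Y x y)].
have oZ : open Z.
  rewrite openE => y [[i Bi]|[x xX Yy]].
    apply: (@filterS _ _ _ (B i)); first by move=> z Bz; left; exists i.
    by apply: open_nbhs_nbhs; split.
  apply: (@filterS _ _ _ (Y x)); first by move=> z Yz; right; exists x.
  by apply: open_nbhs_nbhs; split => //; case: (hY x) => -[].
have KZ i : forall k, K k -> s k = r (f i) -> Z (mul k (f i)).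
  move=> k Kk e; have [fD'|nD] := boolP (mul k (f i) \in DF).
    by have [j fj] := fsurj _ fD'; left; exists j; rewrite -fj.
  have XX : [set` X] (mul k (f i)).
    rewrite hX; split; first by exists k, (f i); split => //; exact: fD.
    by move=> h; exact: (negP nD h).
  by right; exists (mul k (f i)) => //; case: (hY (mul k (f i))).
have P1 i : \forall w \near u, exists a, B i a /\ s a = w.
  have : nbhs (s (f i)) (s @` B i).
    by apply: open_nbhs_nbhs; split; [exact: open_s|exists (f i)].
  by rewrite sf; apply: filterS => w [a Ba <-]; exists a.
have P2 (ij : 'I_N * 'I_N) : \forall w \near u, forall a b, B ij.1 a -> B ij.2 b ->
    s a = w -> s b = w -> exists g, [/\ E ij g, r g = r a & s g = r b].
  case: ij => i j /=.
  have comp : s (f i) = r (inv (f j)) by rewrite (rinv HA) !sf.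
  have nE : nbhs (mul (f i) (inv (f j))) (E (i, j)).
    by apply: open_nbhs_nbhs; case: (hE (i, j)) => -[].
  have [P [Q [Pn Qn PQ]]] := mul_loc HS comp nE.
  have Qn' := inv_loc HS Qn.
  have L1 := loc_s HS (oB i) (bB i) (Bf i) Pn.
  have L2 := loc_s HS (oB j) (bB j) (Bf j) Qn'.
  rewrite sf in L1; rewrite sf in L2.
  apply: filterS (filterI L1 L2) => w [h1 h2] a b Ba Bb sa sb.
  have sab : s a = s b by rewrite sa sb.
  have [ra sb'] := mul_inv_rs HA sab.
  exists (mul a (inv b)); split => //.
  by apply: PQ; [exact: h1|exact: h2|rewrite (rinv HA)].
have P3 i : \forall w \near u, forall a, B i a -> s a = w ->
    forall k, K k -> s k = r a -> Z (mul k a).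
  have [Q [Qn HQ]] := tube HS cK oZ (KZ i).
  have L := loc_s HS (oB i) (bB i) (Bf i) Qn; rewrite sf in L.
  by apply: filterS L => w h a Ba sa k Kk ska; apply: HQ (h a Ba sa) Kk ska.
pose Pw := [set w | (forall i, exists a, B i a /\ s a = w) /\
  (forall ij : 'I_N * 'I_N, forall a b, B ij.1 a -> B ij.2 b ->
    s a = w -> s b = w -> exists g, [/\ E ij g, r g = r a & s g = r b]) /\
  (forall i, forall a, B i a -> s a = w ->
    forall k, K k -> s k = r a -> Z (mul k a))].
have nPw : nbhs u Pw.
  have n1 := filter_forall (nbhs_filter u) P1. have n2 := filter_forall (nbhs_filter u) P2.
  have n3 := filter_forall (nbhs_filter u) P3.
  by apply: filterS (filterI n1 (filterI n2 n3)) => w [h1 [h2 h3]].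
exists N, B, (fun i j => E (i, j)), i0, (Pw° `&` units G); split; first by split.
split.
- split; first by apply: openI; [exact: open_interior|exact: units_open HS].
  + by move=> w [].
  + by move=> i; case: (hB i).
- by move=> i j; case: (hE (i, j)).
- exact: Bu.
- move=> i j a b ne Ba Bb rab; apply: (Vdis i j (r a) ne); first exact: BV.
  by rewrite rab; apply: BV.
move=> w [/interior_subset [h1 [h2 h3]] uw]; split => //.
  by move=> i j a b; apply: (h2 (i, j)).
have [af haf] := choice h1.
have afinj : injective af.
  move=> i j e; apply/eqP; apply: contraT => ne.
  have [Bi _] := haf i; have [Bj _] := haf j.
  have Vj : V j (r (af i)) by rewrite e; exact: BV.
  by case: (Vdis i j _ ne (BV _ _ Bi) Vj).
pose l := [seq af i | i <- enum 'I_N].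
have ul : uniq l by rewrite map_inj_uniq ?enum_uniq.
have [hl cl] := fset_of_uniq ul.
set Fw := [set a | exists i, B i a /\ s a = w].
have Fw_eq : Fw = [set x | x \in l].
  apply/seteqP; split => x /=.
    move=> [i [Bx sx]].
    have -> : x = af i by apply: (bB i).2 => //; [case: (haf i)|rewrite sx; case: (haf i)].
    by rewrite map_f // mem_enum.
  by move=> /mapP [i _ ->]; exists i; exact: haf i.
have cov : bnd G K Fw `<=` [set y | exists2 x, x \in enum_fset X & [set y | Y x y /\ s y = w] y].
  move=> y [[k [a [Kk [i [Ba sa]] ska ->]]] nF].
  have := h3 i a Ba sa k Kk ska; case => [[j Bj]|[x xX Yx]].
    by exfalso; apply: nF; exists j; split => //; rewrite (smul HA ska).
  by exists x => //; split => //; rewrite (smul HA ska).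
have inj : forall x y y', [set y | Y x y /\ s y = w] y -> [set y | Y x y /\ s y = w] y' ->
    bnd G K Fw y -> bnd G K Fw y' -> y = y'.
  move=> x y y' [Yy sy] [Yy' sy'] _ _; case: (hY x) => -[_ bY _] _.
  by apply: bY.2 => //; rewrite sy sy'.
have [D [hD cD]] := count_cover cov inj.
split; first by exists (af i0), i0; exact: haf i0.
exists [fset x in l]%fset, D; split => //; first by rewrite hl Fw_eq.
rewrite cl size_map size_enum_ord.
apply: le_trans cX; rewrite ler_nat.
exact: cD.
Qed.

End Local.

Section Tower.
Context {T : topologicalType} (G : groupoid T).
Local Notation s := (gsrc G).
Local Notation r := (grng G).
Local Notation mul := (gmul G).
Local Notation inv := (ginv G).
Context (HS : standing_groupoid G) (HP : principal G).
Let HA := HA HS.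

Definition towerC N (B : 'I_N -> set T) (W : set T) (i j : 'I_N) : set T :=
  [set g | exists w a b, W w /\ (B i a /\ s a = w) /\ (B j b /\ s b = w) /\
     (r g = r a /\ s g = r b)].

Lemma open_pre (f : T -> T) (A : set T) : continuous f -> open A -> open (f @^-1` A).
Proof. by move=> cf oA; exact: (continuousP _).1 cf A oA. Qed.
Lemma closed_pre (f : T -> T) (A : set T) : continuous f -> closed A -> closed (f @^-1` A).
Proof. by move=> cf cA; apply: preimage_closed => // x _; exact: cf. Qed.

Lemma tower K eps N B E i0 O (W : set T) :
  @local_data _ G K eps N B E i0 O -> compact W -> open W -> W `<=` O ->
  let C := towerC B W in
  [/\ multisection G C, (forall i j, compact (C i j) /\ open (C i j)),
      (forall i, C i i0 = [set a | B i a /\ W (s a)]) & C i0 i0 = W].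
Proof.
move=> [[oO Ou cobB] cobE Bu Bdis HO] cW oW WO C.
have oB i : open (B i) by case: (cobB i).
have cB i : compact (B i) by case: (cobB i).
have bB i : bisection G (B i) by case: (cobB i).
have ex w i : W w -> exists a, B i a /\ s a = w.
  by move=> /WO /HO [h _ _]; apply: h.
have pr w i j a b : W w -> B i a -> B j b -> s a = w -> s b = w ->
    exists g, [/\ E i j g, r g = r a & s g = r b].
  by move=> /WO /HO [_ h _]; apply: h.
have clW : closed W := compact_closedT HS cW.
have Ci0 i : C i i0 = [set a | B i a /\ W (s a)].
  apply/seteqP; split => g.
    move=> [w [a [b [Ww [[Ba sa] [[Bb sb] [rg sg]]]]]]].
    have bw : b = w by rewrite -sb (units_s HA (Bu _ Bb)).
    have -> : g = a by apply: (eq_rs HA HP) => //; rewrite sg sa (units_r HA (Bu _ Bb)) bw.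
    by split => //; rewrite sa.
  move=> [Bg Wg]; have [b [Bb sb]] := ex _ i0 Wg.
  exists (s g), g, b; repeat split; try done.
  by have bu := Bu _ Bb; rewrite (units_r HA bu) -sb (units_s HA bu).
split.
- split.
  + move=> i j; split.
      move=> x y [w [a [b [Ww [[Ba sa] [[Bb sb] [rx sx]]]]]]].
      move=> [w' [a' [b' [Ww' [[Ba' sa'] [[Bb' sb'] [ry sy]]]]]]] rxy.
      have aa : a = a' by apply: (bB i).1 => //; rewrite -rx -ry.
      have ww : w = w' by rewrite -sa -sa' aa.
      have bb : b = b' by apply: (bB j).2 => //; rewrite sb sb' ww.
      by apply: (eq_rs HA HP) => //; rewrite sx sy bb.
    move=> x y [w [a [b [Ww [[Ba sa] [[Bb sb] [rx sx]]]]]]].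
    move=> [w' [a' [b' [Ww' [[Ba' sa'] [[Bb' sb'] [ry sy]]]]]]] sxy.
    have bb : b = b' by apply: (bB j).1 => //; rewrite -sx -sy.
    have ww : w = w' by rewrite -sb -sb' bb.
    have aa : a = a' by apply: (bB i).2 => //; rewrite sa sa' ww.
    by apply: (eq_rs HA HP) => //; rewrite rx ry aa.
  + move=> i j k; apply/seteqP; split => g.
      move=> [x [y [Cx Cy sxy ->]]].
      move: Cx => [w [a [b [Ww [[Ba sa] [[Bb sb] [rx sx]]]]]]].
      move: Cy => [w' [b' [c [Ww' [[Bb' sb'] [[Bc sc] [ry sy]]]]]]].
      have bb : b = b' by apply: (bB j).1 => //; rewrite -sx -ry.
      have ww : w = w' by rewrite -sb -sb' bb.
      exists w, a, c; repeat split; try done; first by rewrite ww.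
      by rewrite (rmul HA sxy).
      by rewrite (smul HA sxy).
    move=> [w [a [c [Ww [[Ba sa] [[Bc sc] [rg sg]]]]]]].
    have [b [Bb sb]] := ex w j Ww.
    pose x := mul a (inv b); pose y := mul b (inv c).
    have [rx sx] : r x = r a /\ s x = r b by apply: (mul_inv_rs HA); rewrite sa sb.
    have [ry sy] : r y = r b /\ s y = r c by apply: (mul_inv_rs HA); rewrite sb sc.
    have sxy : s x = r y by rewrite sx ry.
    exists x, y; split => //.
    * by exists w, a, b.
    * by exists w, b, c.
    * apply: (eq_rs HA HP); first by rewrite (smul HA sxy) sy.
      by rewrite (rmul HA sxy) rx.
  + move=> i g [w [a [b [Ww [[Ba sa] [[Bb sb] [rx sx]]]]]]].
    have ab : a = b by apply: (bB i).2 => //; rewrite sa sb.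
    by apply: HP; rewrite sx rx ab.
  + move=> i j ne; apply/seteqP; split => // g [].
    move=> [w [a [b [Ww [[Ba sa] [[Bb sb] [rx sx]]]]]]].
    move=> [w' [a' [b' [Ww' [[Ba' sa'] [[Bb' sb'] [ry sy]]]]]]].
    by apply: (Bdis i j a a' ne) => //; rewrite -rx -ry.
- move=> i j.
  pose Bj := B j `&` s @^-1` W.
  have oBj : open Bj by apply: openI => //; apply: open_pre => //; exact: s_cont HS.
  have cBj : compact Bj.
    by apply: compact_closedI => //; apply: closed_pre => //; exact: s_cont HS.
  pose Vj := r @` Bj.
  have oVj : open Vj by exact: open_r.
  have cVj : compact Vj.
    by apply: continuous_compact => //; apply: continuous_subspaceT; exact: r_cont HS.
  have CE : C i j = E i j `&` s @^-1` Vj.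
    apply/seteqP; split => g.
      move=> [w [a [b [Ww [[Ba sa] [[Bb sb] [rg sg]]]]]]].
      have [g' [Eg' rg' sg']] := pr w i j a b Ww Ba Bb sa sb.
      have -> : g = g' by apply: (eq_rs HA HP); rewrite ?sg ?sg' ?rg ?rg'.
      split => //; exists b; last by rewrite sg'.
      by split => //; rewrite /= sb.
    move=> [Eg [b [Bb Wb] sg]].
    have [a [Ba sa]] := ex _ i Wb.
    have [g' [Eg' rg' sg']] := pr (s b) i j a b Wb Ba Bb sa erefl.
    have gg : g = g'.
      by case: (cobE i j) => _ _ bE; apply: bE.2 => //; rewrite sg' sg.
    by exists (s b), a, b; repeat split; try done; rewrite gg.
  rewrite CE; split.
    apply: compact_closedI; first by case: (cobE i j).
    apply: closed_pre; first exact: s_cont HS.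
    by apply: (compact_closedT HS).
  apply: openI; first by case: (cobE i j).
  by apply: open_pre => //; exact: s_cont HS.
- exact: Ci0.
- rewrite Ci0; apply/seteqP; split => [w [Bw Ww]|w Ww].
    by rewrite -(units_s HA (Bu _ Bw)).
  have [a [Ba sa]] := ex _ i0 Ww.
  have aw : a = w by rewrite -sa (units_s HA (Bu _ Ba)).
  by split; rewrite -aw // sa.
Qed.

End Tower.

Lemma compact_fin {T : topologicalType} (I : finType) (F : I -> set T) :
  (forall i, compact (F i)) -> compact [set x | exists i, F i x].
Proof.
move=> cF.
suff -> : [set x | exists i, F i x] = \big[setU/set0]_(i <- enum I) F i.
  by apply: bigsetU_compact.
rewrite -bigcup_seq; apply/seteqP; split => x.
  by move=> [i Fi]; exists i => //=; rewrite mem_enum.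
by move=> [i _ Fi]; exists i.
Qed.

Unset Implicit Arguments.
Set Strict Implicit.

Theorem mainTheorem9 (T : topologicalType) (G : groupoid T) :
  standing_groupoid G -> principal G -> ubiquitously_fiberwise_amenable G ->
  forall K : set T, compact K -> forall eps : R, (0 < eps)%R ->
    exists S : set T, normal_folner G K eps S.
Proof.
move=> HS HP UFA K cK eps eps0.
have HA := HA HS.
have Wex : forall u, exists W : set T, units G u -> [/\ compact W, open W, W u &
   exists N B E i0 O, W `<=` O /\ @local_data _ G K eps N B E i0 O].
  move=> u; have [uu|nu] := pselect (units G u); last by exists set0.
  have [N [B [E [i0 [Oo [Ou LD]]]]]] := local HS HP UFA cK eps0 uu.
  have oO : open Oo by case: LD => -[].
  have [Wa [[cWa oWa _] Wau WaO]] := ample HS oO Ou.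
  by exists Wa => _; split => //; exists N, B, E, i0, Oo.
have [Wf hW] := choice Wex.
have nW : forall u, units G u -> nbhs u (Wf u).
  by move=> u /hW [_ oW Wu _]; apply: open_nbhs_nbhs.
have [D [Du cov]] := fin_cover (units_compact HS) nW.
pose us := enum_fset D.
pose m := size us.
pose pt (l : 'I_m) := tnth (in_tuple us) l.
have ptD l : pt l \in D by rewrite /pt mem_tnth.
have ptu l : units G (pt l) by apply: Du.
have ptsurj x : x \in D -> exists l, pt l = x.
  move=> xD; have lt : (index x us < m)%N by rewrite index_mem.
  by exists (Ordinal lt); rewrite /pt (tnth_nth x) /= nth_index.
pose Y := {N : nat & (('I_N -> set T) * ('I_N -> 'I_N -> set T) * 'I_N * set T)%type}.
have LDex : forall l : 'I_m, exists d : Y, Wf (pt l) `<=` (projT2 d).2 /\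
   @local_data _ G K eps (projT1 d) (projT2 d).1.1.1 (projT2 d).1.1.2 (projT2 d).1.2 (projT2 d).2.
  move=> l; have [_ _ _ [N [B [E [i0 [Oo [WO LD]]]]]]] := hW _ (ptu l).
  by exists (existT _ N (B, E, i0, Oo)).
have [dd hdd] := choice LDex.
pose n l := projT1 (dd l).
pose Bl l := (projT2 (dd l)).1.1.1.
pose il l := (projT2 (dd l)).1.2.
pose Ol l := (projT2 (dd l)).2.
have LDl l := (hdd l).2.
have WOl l : Wf (pt l) `<=` Ol l := (hdd l).1.
have cWl l : compact (Wf (pt l)) by case: (hW _ (ptu l)).
have oWl l : open (Wf (pt l)) by case: (hW _ (ptu l)).
pose W' (l : 'I_m) := [set x | Wf (pt l) x /\ forall k : 'I_m, (k < l)%N -> ~ Wf (pt k) x].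
have W'O l : W' l `<=` Ol l by move=> x [/WOl].
have clW l : closed (Wf (pt l)) by apply: (compact_closedT HS).
have cW' l : compact (W' l).
  apply: compact_closedI => //; rewrite -openC openE => x /= nx.
  have [k kl Wk] : exists2 k : 'I_m, (k < l)%N & Wf (pt k) x.
    apply: contrapT => nex; apply: nx => k kl Wk; apply: nex; by exists k.
  apply: (@filterS _ _ _ (Wf (pt k))); last by apply: open_nbhs_nbhs; split.
  by move=> y Wy hy; apply: (hy k kl Wy).
have oW' l : open (W' l).
  rewrite openE => x [Wx nx].
  have h2 : nbhs x [set y | forall k : 'I_m, (k < l)%N -> ~ Wf (pt k) y].
    apply: filter_forall => k; have [kl|nkl] := boolP (k < l)%N.
      have : open (~` Wf (pt k)) by rewrite openC.
      move=> oc; apply: filterS (open_nbhs_nbhs (conj oc (nx k kl))) => y ny _; exact: ny.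
    by apply: filterS filterT => y _.
  have h1 : nbhs x (Wf (pt l)) by apply: open_nbhs_nbhs.
  by apply: filterS (filterI h1 h2) => y [Wy hy]; split.
have W'cov x : units G x -> exists l, W' l x.
  move=> ux; have [z zD Wz] := cov x ux; have [k ptk] := ptsurj _ zD.
  pose P := fun n => `[< exists k : 'I_m, (k : nat) = n /\ Wf (pt k) x >].
  have Pex : exists n, P n by exists k; apply/asboolP; exists k; rewrite ptk.
  case: (ex_minnP Pex) => n0 /asboolP [l [ln Wl]] minn.
  exists l; split => // k' k'l Wk'.
  have : (n0 <= k')%N by apply: minn; apply/asboolP; exists k'.
  by rewrite -ln leqNgt k'l.
have W'dis l l' x : W' l x -> W' l' x -> l = l'.
  move=> [Wl hl] [Wl' hl']; have [lt|gt|e] := ltngtP l l'.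
  - by case: (hl' _ lt Wl).
  - by case: (hl _ gt Wl').
  - exact: val_inj.
have W'u l : W' l `<=` units G.
  by move=> x /W'O xO; case: (LDl l) => -[_ Ou _] _ _ _ _; exact: Ou.
pose C l := towerC G (Bl l) (W' l).
have TW l := tower HS HP (LDl l) (cW' l) (oW' l) (@W'O l).
have Cmul l : multisection G (C l) by case: (TW l) => h _ _ _; exact: h.
have Cco l i j : compact (C l i j) /\ open (C l i j).
  by case: (TW l) => _ h _ _; exact: h.
have Ci0 l i : C l i (il l) = [set a | Bl l i a /\ W' l (gsrc G a)].
  by case: (TW l) => _ _ h _; exact: h.
have Ci0i0 l : C l (il l) (il l) = W' l by case: (TW l) => _ _ _ h; exact: h.
pose S := [set g | exists l i, C l i (il l) g].
exists S; split.
  split.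
    have -> : S = [set g | exists l, [set g | exists i, C l i (il l) g] g] by [].
    apply: compact_fin => l; apply: compact_fin => i; exact: (Cco l i (il l)).1.
  split.
    rewrite openE => g [l [i Cg]].
    apply: (@filterS _ _ _ (C l i (il l))); first by move=> y Cy; exists l, i.
    by apply: open_nbhs_nbhs; split => //; exact: (Cco l i (il l)).2.
  exists m, n, C, il; split => //.
  - split => // l i j ne; rewrite !Ci0; apply/seteqP; split => // a [[Bi _] [Bj _]].
    by case: (LDl l) => _ _ _ Bdis _; apply: (Bdis i j a a ne Bi Bj).
  - apply/seteqP; split => x.
      by move=> /W'cov [l Wl]; exists l; rewrite Ci0i0.
    by move=> [l]; rewrite Ci0i0; apply: W'u.
  - move=> l l' ne; rewrite !Ci0i0; apply/seteqP; split => // x [Wl Wl'].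
    by move: ne; rewrite (W'dis _ _ _ Wl Wl') eqxx.
move=> u uu; have [l Wl] := W'cov u uu.
have key : fiber G S u = [set a | exists i, Bl l i a /\ gsrc G a = u].
  apply/seteqP; split => a.
    move=> [[l' [i Ca]] sa]; move: Ca; rewrite Ci0 => -[Ba Wa].
    rewrite sa in Wa; have ll := W'dis _ _ _ Wa Wl.
    by subst l'; exists i.
  move=> [i [Ba sa]]; split => //; exists l, i; rewrite Ci0; split => //.
  by rewrite sa.
rewrite key; case: (LDl l) => _ _ _ _ HO.
by have [_ _ F] := HO u (W'O l u Wl).
Qed.
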